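(* Let $s_0\in(0,1)$ and $\tau,\eta,\lambda>0$, and let $(I_j^0)_{j\in\mathbb{Z}}$ be a finitely supported sequence with $I_j^0\in[0,1)$ for all $j$ and $I_j^0>0$ for at least one $j$. Define $f(v):=s_0(1-e^{-\tau v})-\eta v$ and $\mathscr{R}_0:=s_0\tau/\eta$. Then the stationary equation $$0=f(\mathcal{I}_j)+I_j^0+\lambda\left(\mathcal{I}_{j-1}-2\mathcal{I}_j+\mathcal{I}_{j+1}\right),\qquad j\in\mathbb{Z},$$ admits a unique positive, bounded solution $(\mathcal{I}_j^\infty)_{j\in\mathbb{Z}}$, and it satisfies $\lim_{|j|\to+\infty}\mathcal{I}_j^\infty=0$ if $\mathscr{R}_0\le 1$, and $\lim_{|j|\to+\infty}\mathcal{I}_j^\infty=\mathcal{I}_*$ if $\mathscr{R}_0>1$, where $\mathcal{I}_*>0$ is the unique positive zero of $f$.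
   Context: This is the stationary version of the lattice differential equation $\mathcal{I}_j'(t)=f(\mathcal{I}_j(t))+I_j^0+\lambda(\mathcal{I}_{j-1}(t)-2\mathcal{I}_j(t)+\mathcal{I}_{j+1}(t))$, $j\in\mathbb{Z}$, satisfied by the cumulative density of infected individuals in an SIR model on $\mathbb{Z}$ with initial susceptible density $s_0$ and initial infected density $I_j^0$. *)

(* Defs.v *)
From Stdlib Require Import Reals ZArith Lra.
Open Scope R_scope.

Definition fSIR (s0 tau eta : R) (v : R) : R :=
  s0 * (1 - exp (- tau * v)) - eta * v.

Definition R0_SIR (s0 tau eta : R) : R := s0 * tau / eta.

Definition stationary_solution (s0 tau eta lambda : R) (I0 : Z -> R) (I : Z -> R) : Prop :=
  forall j : Z,
    0 = fSIR s0 tau eta (I j) + I0 j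
        + lambda * (I (j - 1)%Z - 2 * I j + I (j + 1)%Z).

Definition positive_seq (I : Z -> R) : Prop := forall j : Z, 0 < I j.

Definition bounded_seq (I : Z -> R) : Prop := exists M : R, forall j : Z, Rabs (I j) <= M.

Definition finitely_supported (I0 : Z -> R) : Prop :=
  exists N : Z, forall j : Z, (N < Z.abs j)%Z -> I0 j = 0.

Definition lim_abs_infty (I : Z -> R) (L : R) : Prop :=
  forall eps : R, 0 < eps ->
    exists N : Z, forall j : Z, (N <= Z.abs j)%Z -> Rabs (I j - L) < eps.

(* Main.v *)
Require Import Defs.
From Stdlib Require Import Reals ZArith Lra Lia Psatz Classical.
Open Scope R_scope.

Lemma exp_tangent (y p : R) : y <> p -> exp p * (1 + y - p) < exp y.
Proof.
  intro H. replace (exp y) with (exp p * exp (y - p)).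
  2:{ rewrite <- exp_plus. f_equal. ring. }
  apply Rmult_lt_compat_l. apply exp_pos.
  replace (1 + y - p) with (1 + (y - p)) by ring. apply exp_ineq1. lra.
Qed.

Lemma conc (t u v : R) : 0 < t -> 0 < u -> u < v ->
  u * (1 - exp (- t * v)) < v * (1 - exp (- t * u)).
Proof.
  intros Ht Hu Huv.
  set (p := - t * u). set (q := - t * v).
  assert (H1 : exp p * (1 + 0 - p) < exp 0).
  { apply exp_tangent. unfold p. nra. }
  assert (H2 : exp p * (1 + q - p) < exp q).
  { apply exp_tangent. unfold p, q. nra. }
  rewrite exp_0 in H1.
  assert (Hvp : v * p = u * q) by (unfold p, q; ring).
  assert (H3 : (v - u) * (exp p * (1 + 0 - p)) < (v - u) * 1) by (apply Rmult_lt_compat_l; lra).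
  assert (H4 : u * (exp p * (1 + q - p)) < u * exp q) by (apply Rmult_lt_compat_l; lra).
  assert (E : (v - u) * (exp p * (1 + 0 - p)) + u * (exp p * (1 + q - p)) = exp p * v).
  { transitivity (exp p * (v - v * p + u * q)). ring. rewrite Hvp. ring. }
  nra.
Qed.

Lemma conc_le (t u v : R) : 0 < t -> 0 < u -> u <= v ->
  u * (1 - exp (- t * v)) <= v * (1 - exp (- t * u)).
Proof.
  intros Ht Hu Huv. destruct (Req_dec u v) as [->|Hne]. lra.
  left. apply conc; lra.
Qed.

Lemma f_ratio (s0 tau eta u v : R) : 0 < s0 -> 0 < tau -> 0 < u -> u < v ->
  u * fSIR s0 tau eta v < v * fSIR s0 tau eta u.
Proof.
  intros. unfold fSIR. pose proof (conc tau u v H0 H1 H2). nra.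
Qed.

Lemma f_ratio_le (s0 tau eta u v : R) : 0 < s0 -> 0 < tau -> 0 < u -> u <= v ->
  u * fSIR s0 tau eta v <= v * fSIR s0 tau eta u.
Proof.
  intros. unfold fSIR. pose proof (conc_le tau u v H0 H1 H2). nra.
Qed.

Lemma f_neg_R0 (s0 tau eta v : R) : 0 < s0 -> 0 < tau -> 0 < eta ->
  R0_SIR s0 tau eta <= 1 -> 0 < v -> fSIR s0 tau eta v < 0.
Proof.
  intros Hs Ht He HR Hv. unfold R0_SIR in HR. unfold fSIR.
  assert (s0 * tau <= eta).
  { apply (Rmult_le_compat_r eta) in HR; [|lra].
    unfold Rdiv in HR. rewrite Rmult_assoc, Rinv_l in HR; lra. }
  assert (1 + (- tau * v) < exp (- tau * v)) by (apply exp_ineq1; nra).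
  nra.
Qed.

Lemma f_pos_small (s0 tau eta : R) : 0 < s0 -> 0 < tau -> 0 < eta ->
  1 < R0_SIR s0 tau eta -> exists x, 0 < x /\ 0 < fSIR s0 tau eta x.
Proof.
  intros Hs Ht He HR. unfold R0_SIR in HR.
  assert (Hk : eta < s0 * tau).
  { apply (Rmult_lt_compat_r eta) in HR; [|lra].
    unfold Rdiv in HR. rewrite Rmult_assoc, Rinv_l in HR; lra. }
  pose proof derivable_pt_lim_exp_0 as D. unfold derivable_pt_lim in D.
  set (e := (s0 * tau - eta) / (s0 * tau)).
  assert (He0 : 0 < e) by (unfold e; apply Rdiv_lt_0_compat; nra).
  destruct (D e He0) as [[d Hd] Hdd]. simpl in Hdd.
  set (x := d / (2 * tau)).
  assert (Hx : 0 < x) by (unfold x; apply Rdiv_lt_0_compat; lra).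
  exists x. split; auto.
  assert (Hh : - tau * x <> 0) by nra.
  assert (Hha : Rabs (- tau * x) < d).
  { assert (Ex : tau * x = d / 2) by (unfold x; field; lra).
    rewrite Rabs_left by nra. lra. }
  specialize (Hdd _ Hh Hha). rewrite Rplus_0_l, exp_0 in Hdd.
  apply Rabs_def2 in Hdd. destruct Hdd as [_ Hl].
  set (E := exp (- tau * x)) in *.
  assert (Hq : (E - 1) / (- tau * x) = (1 - E) / (tau * x)) by (field; repeat split; intro; lra).
  rewrite Hq in Hl.
  assert (Hl1 : 1 - e < (1 - E) / (tau * x)) by lra.
  assert (Hl2 : (1 - e) * (tau * x) < 1 - E).
  { apply (Rmult_lt_compat_r (tau * x)) in Hl1; [|nra].
    replace ((1 - E) / (tau * x) * (tau * x)) with (1 - E) in Hl1 by (field; repeat split; intro; lra). lra. }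
  unfold fSIR. fold E.
  assert (Hse : s0 * ((1 - e) * (tau * x)) = eta * x).
  { unfold e. field. repeat split; intro; lra. }
  nra.
Qed.

Lemma f_cont (s0 tau eta : R) : continuity (fSIR s0 tau eta).
Proof.
  unfold fSIR. intro x. reg.
Qed.

Lemma Istar_exists (s0 tau eta : R) : 0 < s0 -> 0 < tau -> 0 < eta ->
  1 < R0_SIR s0 tau eta -> exists z, 0 < z /\ fSIR s0 tau eta z = 0.
Proof.
  intros Hs Ht He HR.
  destruct (f_pos_small s0 tau eta Hs Ht He HR) as [x [Hx Hfx]].
  set (y := x + (s0 + 1) / eta).
  assert (Hy : fSIR s0 tau eta y < 0).
  { unfold fSIR. pose proof (exp_pos (- tau * y)).
    assert (eta * y = eta * x + (s0 + 1)) by (unfold y; field; lra). nra. }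
  assert (Hxy : x < y) by (unfold y; assert (0 < (s0+1)/eta) by (apply Rdiv_lt_0_compat; lra); lra).
  destruct (IVT (fun v => - fSIR s0 tau eta v) x y) as [z [Hz1 Hz2]].
  - intro v. apply continuity_pt_opp. apply f_cont.
  - exact Hxy.
  - lra.
  - lra.
  - exists z. split; lra.
Qed.

Lemma lin_lower (a : nat -> R) (n : nat) (d : R) :
  (forall m, a (S (n + m)%nat) - a (n + m)%nat >= d) ->
  forall m, a (n + m)%nat >= a n + INR m * d.
Proof.
  intros H m. induction m.
  - rewrite Nat.add_0_r. simpl. lra.
  - rewrite Nat.add_succ_r, S_INR. specialize (H m). lra.
Qed.

Lemma grow_contra (a : nat -> R) (M : R) (n : nat) (d : R) : 0 < d ->
  (forall k, a k <= M) -> (forall m, a (S (n + m)%nat) - a (n + m)%nat >= d) -> False.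
Proof.
  intros Hd HM H. destruct (INR_archimed d (M - a n)) as [m Hm]; [lra|].
  pose proof (lin_lower a n d H m). specialize (HM (n + m)%nat). lra.
Qed.

Lemma shrink_contra (a : nat -> R) (n : nat) (d : R) : 0 < d ->
  (forall k, 0 < a k) -> (forall m, a (S (n + m)%nat) - a (n + m)%nat <= - d) -> False.
Proof.
  intros Hd HP H.
  apply (grow_contra (fun k => - a k) 0 n d Hd).
  - intro k. specialize (HP k). lra.
  - intro m. specialize (H m). simpl. lra.
Qed.

Definition hrec (lam : R) (F : R -> R) (a : nat -> R) :=
  forall k, lam * (a k - 2 * a (S k) + a (S (S k))) + F (a (S k)) = 0.

Lemma half_le (s0 tau eta lam M : R) (a : nat -> R) :
  0 < s0 -> 0 < tau -> 0 < eta -> 0 < lam -> R0_SIR s0 tau eta <= 1 ->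
  hrec lam (fSIR s0 tau eta) a -> (forall k, 0 < a k) -> (forall k, a k <= M) ->
  forall eps, 0 < eps -> exists K, forall n, (K <= n)%nat -> Rabs (a n) < eps.
Proof.
  intros Hs Ht He Hl HR Hr HP HM eps Heps.
  set (F := fSIR s0 tau eta) in *.
  assert (Fneg : forall v, 0 < v -> F v < 0) by (intros; apply f_neg_R0; auto).
  assert (Dec : forall n, a (S n) <= a n).
  { intro n. destruct (Rle_dec (a (S n)) (a n)) as [h|h]; auto. exfalso.
    apply (grow_contra a M n (a (S n) - a n)); auto. lra.
    intro m. induction m.
    - rewrite Nat.add_0_r. lra.
    - rewrite Nat.add_succ_r. specialize (Hr (n + m)%nat).
      specialize (Fneg (a (S (n + m)%nat)) (HP _)). nra. }
  assert (Ex : exists K, a K < eps).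
  { destruct (classic (exists K, a K < eps)) as [h|h]; auto. exfalso.
    assert (Ge : forall k, eps <= a k).
    { intro k. destruct (Rle_dec eps (a k)); auto. exfalso. apply h. exists k. lra. }
    assert (Fe : F eps < 0) by auto.
    assert (Fb : forall k, F (a (S k)) <= F eps).
    { intro k. pose proof (f_ratio_le s0 tau eta eps (a (S k)) Hs Ht Heps (Ge _)).
      fold F in H. pose proof (Ge (S k)).
      assert (a (S k) * F eps <= eps * F eps) by nra. nra. }
    apply (grow_contra (fun k => a (S k) - a k) 0 0 (- F eps / lam)).
    - apply Rdiv_lt_0_compat; lra.
    - intro k. specialize (Dec k). lra.
    - intro m. simpl. specialize (Hr m). specialize (Fb m).
      assert (lam * (a (S (S m)) - a (S m) - (a (S m) - a m)) >= - F eps) by lra.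
      apply Rle_ge. apply (Rmult_le_reg_l lam); auto.
      replace (lam * (- F eps / lam)) with (- F eps) by (field; intro; lra). lra. }
  destruct Ex as [K HK]. exists K. intros n Hn.
  assert (Le : forall m, a (K + m)%nat <= a K).
  { intro m. induction m. rewrite Nat.add_0_r; lra.
    rewrite Nat.add_succ_r. specialize (Dec (K + m)%nat). lra. }
  replace n with (K + (n - K))%nat by lia. specialize (Le (n - K)%nat).
  specialize (HP (K + (n - K))%nat). rewrite Rabs_right; lra.
Qed.

Lemma incr_le (a : nat -> R) : (forall n, a n <= a (S n)) ->
  forall K n, (K <= n)%nat -> a K <= a n.
Proof.
  intros H K n Hn. replace n with (K + (n - K))%nat by lia.
  generalize (n - K)%nat. intro m. induction m.
  rewrite Nat.add_0_r; lra. rewrite Nat.add_succ_r. specialize (H (K + m)%nat). lra.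
Qed.

Lemma decr_le (a : nat -> R) : (forall n, a (S n) <= a n) ->
  forall K n, (K <= n)%nat -> a n <= a K.
Proof.
  intros H K n Hn. pose proof (incr_le (fun k => - a k)) as L.
  assert (forall n, - a n <= - a (S n)) by (intro k; specialize (H k); lra).
  specialize (L H0 K n Hn). simpl in L. lra.
Qed.

Lemma half_gt (s0 tau eta lam M Is : R) (a : nat -> R) :
  0 < s0 -> 0 < tau -> 0 < lam -> 0 < Is -> fSIR s0 tau eta Is = 0 ->
  hrec lam (fSIR s0 tau eta) a -> (forall k, 0 < a k) -> (forall k, a k <= M) ->
  forall eps, 0 < eps -> exists K, forall n, (K <= n)%nat -> Rabs (a n - Is) < eps.
Proof.
  intros Hs Ht Hl HIs HFI Hr HP HM.
  set (F := fSIR s0 tau eta) in *.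
  assert (Fpos : forall v, 0 < v -> v < Is -> 0 < F v).
  { intros v H1 H2. pose proof (f_ratio s0 tau eta v Is Hs Ht H1 H2). fold F in H.
    rewrite HFI in H. nra. }
  assert (Fneg : forall v, Is < v -> F v < 0).
  { intros v H1. pose proof (f_ratio s0 tau eta Is v Hs Ht HIs H1). fold F in H.
    rewrite HFI in H. nra. }
  assert (P1 : forall n, Is < a n -> a (S n) < a n).
  { intros n H. destruct (Rlt_dec (a (S n)) (a n)) as [h|h]; auto. exfalso.
    assert (HSn : Is < a (S n)) by lra.
    pose proof (Hr n) as R0. pose proof (Fneg _ HSn).
    set (d := a (S (S n)) - a (S n)).
    assert (Hd : 0 < d) by (unfold d; nra).
    assert (C : forall m, a (S (S n + m)) - a (S n + m)%nat >= d /\ Is < a (S n + m)%nat).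
    { intro m. induction m.
      - rewrite Nat.add_0_r. unfold d. lra.
      - destruct IHm as [I1 I2]. rewrite Nat.add_succ_r.
        assert (I3 : Is < a (S (S n + m))) by lra.
        pose proof (Hr (S n + m)%nat) as R1. pose proof (Fneg _ I3). split; [nra|lra]. }
    apply (grow_contra a M (S n) d Hd HM). intro m. apply C. }
  assert (P2 : forall n, a n < Is -> a n < a (S n)).
  { intros n H. destruct (Rlt_dec (a n) (a (S n))) as [h|h]; auto. exfalso.
    assert (HSn : a (S n) < Is) by lra.
    pose proof (Hr n) as R0. pose proof (Fpos _ (HP _) HSn).
    set (d := a (S n) - a (S (S n))).
    assert (Hd : 0 < d) by (unfold d; nra).
    assert (C : forall m, a (S (S n + m)) - a (S n + m)%nat <= - d /\ a (S n + m)%nat < Is).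
    { intro m. induction m.
      - rewrite Nat.add_0_r. unfold d. lra.
      - destruct IHm as [I1 I2]. rewrite Nat.add_succ_r.
        assert (I3 : a (S (S n + m)) < Is) by lra.
        pose proof (Hr (S n + m)%nat) as R1. pose proof (Fpos _ (HP _) I3). split; [nra|lra]. }
    apply (shrink_contra a (S n) d Hd HP). intro m. apply C. }
  assert (P3 : forall n, Is <= a n -> Is <= a (S n)).
  { intros n H. destruct (Rle_dec Is (a (S n))) as [h|h]; auto. exfalso.
    assert (h' : a (S n) < Is) by lra.
    pose proof (P2 _ h'). pose proof (Hr n). pose proof (Fpos _ (HP _) h'). nra. }
  assert (P4 : forall n, a n <= Is -> a (S n) <= Is).
  { intros n H. destruct (Rle_dec (a (S n)) Is) as [h|h]; auto. exfalso.
    assert (h' : Is < a (S n)) by lra.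
    pose proof (P1 _ h'). pose proof (Hr n). pose proof (Fneg _ h'). nra. }
  intros eps Heps.
  destruct (Rle_dec Is (a 0%nat)) as [A|B].
  - assert (Ge : forall n, Is <= a n).
    { intro n. induction n; auto. }
    assert (Dec : forall n, a (S n) <= a n).
    { intro n. destruct (Rlt_dec Is (a n)) as [h|h]. left; auto.
      assert (a n = Is) by (specialize (Ge n); lra). pose proof (P4 n). lra. }
    assert (Ex : exists K, a K < Is + eps).
    { destruct (classic (exists K, a K < Is + eps)) as [h|h]; auto. exfalso.
      assert (G2 : forall k, Is + eps <= a k).
      { intro k. destruct (Rle_dec (Is + eps) (a k)); auto. exfalso. apply h. exists k. lra. }
      assert (Fe : F (Is + eps) < 0) by (apply Fneg; lra).
      assert (Fb : forall k, F (a (S k)) <= F (Is + eps)).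
      { intro k. pose proof (f_ratio_le s0 tau eta (Is + eps) (a (S k)) Hs Ht ltac:(lra) (G2 _)).
        fold F in H. pose proof (G2 (S k)).
        assert (a (S k) * F (Is + eps) <= (Is + eps) * F (Is + eps)) by nra. nra. }
      apply (grow_contra (fun k => a (S k) - a k) 0 0 (- F (Is + eps) / lam)).
      - apply Rdiv_lt_0_compat; lra.
      - intro k. specialize (Dec k). lra.
      - intro m. simpl. specialize (Hr m). specialize (Fb m).
        apply Rle_ge. apply (Rmult_le_reg_l lam); auto.
        replace (lam * (- F (Is + eps) / lam)) with (- F (Is + eps)) by (field; intro; lra). lra. }
    destruct Ex as [K HK]. exists K. intros n Hn.
    pose proof (decr_le a Dec K n Hn). pose proof (Ge n). rewrite Rabs_right; lra.
  - assert (Le : forall n, a n <= Is).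
    { intro n. induction n; auto. lra. }
    assert (Inc : forall n, a n <= a (S n)).
    { intro n. destruct (Rlt_dec (a n) Is) as [h|h]. left; auto.
      assert (a n = Is) by (specialize (Le n); lra). pose proof (P3 n). lra. }
    destruct (Rle_dec Is eps) as [Hbig|Hsmall].
    { exists 0%nat. intros n _. specialize (Le n). specialize (HP n).
      rewrite Rabs_left1; lra. }
    set (b := Is - eps).
    assert (Hb : 0 < b) by (unfold b; lra).
    assert (Ex : exists K, b < a K).
    { destruct (classic (exists K, b < a K)) as [h|h]; auto. exfalso.
      assert (G2 : forall k, a k <= b).
      { intro k. destruct (Rle_dec (a k) b); auto. exfalso. apply h. exists k. lra. }
      assert (Fe : 0 < F b) by (apply Fpos; unfold b; lra).
      set (c := a 0%nat * F b / b).
      assert (Hc : 0 < c) by (unfold c; apply Rdiv_lt_0_compat; [apply Rmult_lt_0_compat|]; auto).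
      assert (Fb : forall k, c <= F (a (S k))).
      { intro k. pose proof (f_ratio_le s0 tau eta (a (S k)) b Hs Ht (HP _) (G2 _)).
        fold F in H. pose proof (incr_le a Inc 0 (S k) ltac:(lia)).
        assert (a 0%nat * F b <= b * F (a (S k))) by nra.
        unfold c. apply (Rmult_le_reg_l b); auto.
        replace (b * (a 0%nat * F b / b)) with (a 0%nat * F b) by (field; intro; lra). lra. }
      apply (grow_contra (fun k => - (a (S k) - a k)) 0 0 (c / lam)).
      - apply Rdiv_lt_0_compat; lra.
      - intro k. specialize (Inc k). lra.
      - intro m. simpl. specialize (Hr m). specialize (Fb m).
        apply Rle_ge. apply (Rmult_le_reg_l lam); auto.
        replace (lam * (c / lam)) with c by (field; intro; lra). lra. }
    destruct Ex as [K HK]. exists K. intros n Hn.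
    pose proof (incr_le a Inc K n Hn). pose proof (Le n). rewrite Rabs_left1; unfold b in HK; lra.
Qed.

Definition Top (s0 tau eta lam : R) (I0 : Z -> R) (I : Z -> R) (j : Z) : R :=
  (lam * (I (j - 1)%Z + I (j + 1)%Z) + s0 * (1 - exp (- tau * I j)) + I0 j) / (2 * lam + eta).

Fixpoint uit (s0 tau eta lam : R) (I0 : Z -> R) (n : nat) : Z -> R :=
  match n with
  | O => fun _ => 0
  | S n => Top s0 tau eta lam I0 (uit s0 tau eta lam I0 n)
  end.

Lemma exp_mono_le (x y : R) : x <= y -> exp x <= exp y.
Proof. intros [H|H]. left; apply exp_increasing; auto. subst; lra. Qed.

Lemma Top_mono (s0 tau eta lam : R) (I0 : Z -> R) (I I' : Z -> R) :
  0 < s0 -> 0 < tau -> 0 < eta -> 0 < lam ->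
  (forall j, I j <= I' j) -> forall j, Top s0 tau eta lam I0 I j <= Top s0 tau eta lam I0 I' j.
Proof.
  intros Hs Ht He Hl H j. unfold Top. unfold Rdiv.
  apply Rmult_le_compat_r. left; apply Rinv_0_lt_compat; lra.
  pose proof (H (j-1)%Z). pose proof (H (j+1)%Z).
  assert (exp (- tau * I' j) <= exp (- tau * I j)) by (apply exp_mono_le; specialize (H j); nra).
  nra.
Qed.

Lemma Top_fix (s0 tau eta lam : R) (I0 : Z -> R) (I : Z -> R) :
  0 < eta -> 0 < lam ->
  (stationary_solution s0 tau eta lam I0 I <-> forall j, Top s0 tau eta lam I0 I j = I j).
Proof.
  intros He Hl. unfold stationary_solution, Top, fSIR. split.
  - intros H j. specialize (H j). field_simplify_eq; [lra|intro; lra].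
  - intros H j. specialize (H j).
    apply (f_equal (fun x => x * (2 * lam + eta))) in H.
    replace ((lam * (I (j - 1)%Z + I (j + 1)%Z) + s0 * (1 - exp (- tau * I j)) + I0 j) /
       (2 * lam + eta) * (2 * lam + eta)) with
      (lam * (I (j - 1)%Z + I (j + 1)%Z) + s0 * (1 - exp (- tau * I j)) + I0 j) in H
      by (field; intro; lra).
    lra.
Qed.

Lemma uit_props (s0 tau eta lam : R) (I0 : Z -> R) :
  0 < s0 < 1 -> 0 < tau -> 0 < eta -> 0 < lam -> (forall j, 0 <= I0 j < 1) ->
  forall n j, 0 <= uit s0 tau eta lam I0 n j /\
     uit s0 tau eta lam I0 n j <= uit s0 tau eta lam I0 (S n) j /\
     uit s0 tau eta lam I0 n j <= (s0 + 1) / eta.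
Proof.
  intros Hs Ht He Hl HI.
  assert (Mpos : 0 < (s0 + 1) / eta) by (apply Rdiv_lt_0_compat; lra).
  assert (Inc : forall n j, uit s0 tau eta lam I0 n j <= uit s0 tau eta lam I0 (S n) j).
  { intro n. induction n; intro j.
    - simpl. unfold Top. rewrite Rmult_0_r, exp_0.
      unfold Rdiv. apply Rmult_le_pos. specialize (HI j). lra. left; apply Rinv_0_lt_compat; lra.
    - simpl. apply Top_mono; try lra. exact IHn. }
  assert (Nn : forall n j, 0 <= uit s0 tau eta lam I0 n j).
  { intro n. induction n; intro j. simpl; lra. specialize (Inc n j). specialize (IHn j). lra. }
  assert (Bd : forall n j, uit s0 tau eta lam I0 n j <= (s0 + 1) / eta).
  { intro n. induction n; intro j. simpl; lra.
    simpl. eapply Rle_trans. apply Top_mono; try lra. exact IHn.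
    unfold Top. cbv beta. pose proof (exp_pos (- tau * ((s0 + 1) / eta))).
    apply (Rmult_le_reg_r (2 * lam + eta)). lra.
    set (M := (s0 + 1) / eta).
    replace ((lam * (M + M) + s0 * (1 - exp (- tau * M)) + I0 j) / (2 * lam + eta) * (2 * lam + eta))
      with (lam * (M + M) + s0 * (1 - exp (- tau * M)) + I0 j) by (field; intro; lra).
    assert (eta * M = s0 + 1) by (unfold M; field; intro; lra).
    specialize (HI j). assert (0 <= s0 * exp (- tau * M)) by (apply Rmult_le_pos; [lra|left; apply exp_pos]). lra. }
  intros n j. auto.
Qed.

Lemma uit_below (s0 tau eta lam : R) (I0 : Z -> R) (J : Z -> R) :
  0 < s0 -> 0 < tau -> 0 < eta -> 0 < lam ->
  stationary_solution s0 tau eta lam I0 J -> (forall j, 0 <= J j) ->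
  forall n j, uit s0 tau eta lam I0 n j <= J j.
Proof.
  intros Hs Ht He Hl HJ Hp n. pose proof (proj1 (Top_fix s0 tau eta lam I0 J He Hl) HJ) as HT. clear HJ.
  induction n; intro j. simpl; auto.
  simpl. rewrite <- HT. apply Top_mono; auto.
Qed.

Lemma cv_const (c : R) : Un_cv (fun _ => c) c.
Proof. intros e He. exists 0%nat. intros. unfold Rdist. rewrite Rminus_diag, Rabs_R0. lra. Qed.

Lemma cv_shift (u : nat -> R) (l : R) : Un_cv u l -> Un_cv (fun n => u (S n)) l.
Proof. intros H e He. destruct (H e He) as [N HN]. exists N. intros n Hn. apply HN. lia. Qed.

Lemma cv_le (u : nat -> R) (l B : R) : Un_cv u l -> (forall n, u n <= B) -> l <= B.
Proof.
  intros H HB. destruct (Rle_dec l B) as [h|h]; auto. exfalso.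
  destruct (H (l - B)) as [N HN]. lra. specialize (HN N (le_n _)). specialize (HB N).
  unfold Rdist in HN. apply Rabs_def2 in HN. lra.
Qed.

Lemma Iinf_exists (s0 tau eta lam : R) (I0 : Z -> R) :
  0 < s0 < 1 -> 0 < tau -> 0 < eta -> 0 < lam -> (forall j, 0 <= I0 j < 1) ->
  exists Iinf : Z -> R, forall j, Un_cv (fun n => uit s0 tau eta lam I0 n j) (Iinf j).
Proof.
  intros Hs Ht He Hl HI.
  pose proof (uit_props s0 tau eta lam I0 Hs Ht He Hl HI) as P.
  assert (X : forall j, {l | Un_cv (fun n => uit s0 tau eta lam I0 n j) l}).
  { intro j. apply growing_cv.
    - intro n. apply (P n j).
    - exists ((s0 + 1) / eta). intros x [i ->]. apply (P i j). }
  exists (fun j => proj1_sig (X j)). intro j. apply (proj2_sig (X j)).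
Qed.

Lemma Iinf_fix (s0 tau eta lam : R) (I0 : Z -> R) (Iinf : Z -> R) :
  0 < eta -> 0 < lam ->
  (forall j, Un_cv (fun n => uit s0 tau eta lam I0 n j) (Iinf j)) ->
  forall j, Top s0 tau eta lam I0 Iinf j = Iinf j.
Proof.
  intros He Hl H j.
  apply (UL_sequence (fun n => uit s0 tau eta lam I0 (S n) j)).
  2:{ apply (cv_shift (fun n => uit s0 tau eta lam I0 n j)). apply H. }
  simpl. unfold Top.
  apply (CV_mult _ (fun _ => / (2 * lam + eta))); [|apply cv_const].
  apply CV_plus; [apply CV_plus|].
  - apply CV_mult. apply cv_const. apply CV_plus; apply H.
  - apply CV_mult. apply cv_const. apply CV_minus. apply cv_const.
    apply (continuity_seq exp (fun n => - tau * uit s0 tau eta lam I0 n j)).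
    apply derivable_continuous. apply derivable_exp.
    apply CV_mult. apply cv_const. apply H.
  - apply cv_const.
Qed.

Lemma Z_cover_up (P : Z -> Prop) (j0 : Z) :
  (forall n : nat, P (j0 + Z.of_nat n)%Z) -> (forall n : nat, P (j0 - Z.of_nat n)%Z) -> forall j, P j.
Proof.
  intros H1 H2 j. destruct (Z_le_gt_dec j0 j).
  - specialize (H1 (Z.to_nat (j - j0))). rewrite Z2Nat.id in H1 by lia.
    replace (j0 + (j - j0))%Z with j in H1 by lia. auto.
  - specialize (H2 (Z.to_nat (j0 - j))). rewrite Z2Nat.id in H2 by lia.
    replace (j0 - (j0 - j))%Z with j in H2 by lia. auto.
Qed.

Lemma wronski (s0 tau eta lam M L : R) (I0 I J : Z -> R) :
  0 < s0 -> 0 < tau -> 0 < lam -> 0 <= L ->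
  (forall j, 0 <= I0 j) -> (exists j0, 0 < I0 j0) ->
  stationary_solution s0 tau eta lam I0 I -> stationary_solution s0 tau eta lam I0 J ->
  (forall j, 0 < I j) -> (forall j, I j <= J j) -> (forall j, J j <= M) ->
  lim_abs_infty I L -> lim_abs_infty J L -> forall j, J j = I j.
Proof.
  intros Hs Ht Hl HL HI0 [j0 Hj0] HsI HsJ HIp HIJ HM HlI HlJ.
  set (F := fSIR s0 tau eta) in *.
  set (W := fun j => I j * J (j + 1)%Z - I (j + 1)%Z * J j).
  assert (Step : forall j, lam * (W j - W (j - 1)%Z) = J j * F (I j) - I j * F (J j) + I0 j * (J j - I j)).
  { intro j. unfold W. replace (j - 1 + 1)%Z with j by lia.
    pose proof (HsI j) as EI. pose proof (HsJ j) as EJ. fold F in EI, EJ.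
    transitivity (I j * (lam * (J (j - 1)%Z + J (j + 1)%Z)) - J j * (lam * (I (j - 1)%Z + I (j + 1)%Z))).
    ring.
    replace (lam * (J (j - 1)%Z + J (j + 1)%Z)) with (2 * lam * J j - F (J j) - I0 j) by lra.
    replace (lam * (I (j - 1)%Z + I (j + 1)%Z)) with (2 * lam * I j - F (I j) - I0 j) by lra.
    ring. }
  assert (Nn : forall j, 0 <= J j * F (I j) - I j * F (J j) /\ 0 <= I0 j * (J j - I j)).
  { intro j. split.
    - pose proof (f_ratio_le s0 tau eta (I j) (J j) Hs Ht (HIp j) (HIJ j)). fold F in H. lra.
    - apply Rmult_le_pos; auto. specialize (HIJ j). lra. }
  assert (Mono1 : forall j, W (j - 1)%Z <= W j).
  { intro j. pose proof (Step j). pose proof (Nn j). nra. }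
  assert (Mono : forall j (n : nat), W j <= W (j + Z.of_nat n)%Z).
  { intros j n. induction n. simpl. replace (j + 0)%Z with j by lia. lra.
    rewrite Nat2Z.inj_succ. pose proof (Mono1 (j + Z.succ (Z.of_nat n))%Z).
    replace (j + Z.succ (Z.of_nat n) - 1)%Z with (j + Z.of_nat n)%Z in H by lia. lra. }
  assert (Mono' : forall j k, (j <= k)%Z -> W j <= W k).
  { intros j k Hjk. specialize (Mono j (Z.to_nat (k - j))). rewrite Z2Nat.id in Mono by lia.
    replace (j + (k - j))%Z with k in Mono by lia. auto. }
  assert (Mpos : 0 < M) by (specialize (HM 0%Z); specialize (HIJ 0%Z); specialize (HIp 0%Z); lra).
  assert (Wlim : forall eps, 0 < eps -> exists N, (0 <= N)%Z /\ forall k, (N <= Z.abs k)%Z -> Rabs (W k) < eps).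
  { intros eps Heps. set (d := eps / (2 * M + 2 * L + 1)).
    assert (Hd : 0 < d) by (unfold d; apply Rdiv_lt_0_compat; lra).
    assert (Hde : (2 * M + 2 * L) * d < eps).
    { unfold d. apply (Rmult_lt_reg_r (2 * M + 2 * L + 1)). lra.
      replace ((2 * M + 2 * L) * (eps / (2 * M + 2 * L + 1)) * (2 * M + 2 * L + 1)) with
        ((2 * M + 2 * L) * eps) by (field; intro; lra). nra. }
    destruct (HlI d Hd) as [N1 H1]. destruct (HlJ d Hd) as [N2 H2].
    exists (Z.abs N1 + Z.abs N2 + 1)%Z. split. lia. intros k Hk.
    assert (A1 := H1 k ltac:(lia)). assert (A2 := H1 (k + 1)%Z ltac:(lia)).
    assert (B1 := H2 k ltac:(lia)). assert (B2 := H2 (k + 1)%Z ltac:(lia)).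
    apply Rabs_def2 in A1, A2, B1, B2.
    pose proof (HIp k) as P1. pose proof (HIJ k) as P2. pose proof (HM k) as P3.
    assert (Ek : W k = I k * (J (k + 1)%Z - L) - J k * (I (k + 1)%Z - L) + L * ((I k - L) - (J k - L))).
    { unfold W. ring. }
    set (b := J (k + 1)%Z - L) in *. set (c := I (k + 1)%Z - L) in *.
    set (a := I k - L) in *. set (e := J k - L) in *.
    assert (T1 : Rabs (I k * b) <= M * d).
    { rewrite Rabs_mult, Rabs_right by lra. apply Rmult_le_compat; try lra. apply Rabs_pos.
      apply Rabs_le; lra. }
    assert (T2 : Rabs (J k * c) <= M * d).
    { rewrite Rabs_mult, Rabs_right by lra. apply Rmult_le_compat; try lra. apply Rabs_pos.
      apply Rabs_le; lra. }
    assert (T3 : Rabs (L * (a - e)) <= L * (2 * d)).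
    { rewrite Rabs_mult, (Rabs_right L) by lra. apply Rmult_le_compat_l; auto.
      apply Rabs_le; lra. }
    rewrite Ek. eapply Rle_lt_trans. apply Rabs_triang.
    eapply Rle_lt_trans. apply Rplus_le_compat_r. eapply Rle_trans. apply Rabs_triang.
    rewrite Rabs_Ropp. apply Rplus_le_compat; [exact T1|exact T2]. lra. }
  assert (W0 : forall j, W j = 0).
  { intro j. destruct (Rtotal_order (W j) 0) as [h|[h|h]]; auto; exfalso.
    - destruct (Wlim (- W j)) as [N [HN HN2]]. lra.
      specialize (HN2 (Z.min j (- N))%Z ltac:(lia)).
      specialize (Mono' (Z.min j (- N))%Z j ltac:(lia)). apply Rabs_def2 in HN2. lra.
    - destruct (Wlim (W j)) as [N [HN HN2]]. lra.
      specialize (HN2 (Z.max j N)%Z ltac:(lia)).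
      specialize (Mono' j (Z.max j N)%Z ltac:(lia)). apply Rabs_def2 in HN2. lra. }
  assert (E0 : J j0 = I j0).
  { pose proof (Step j0). rewrite !W0 in H. pose proof (Nn j0).
    assert (I0 j0 * (J j0 - I j0) = 0) by lra.
    apply Rmult_integral in H1. destruct H1; lra. }
  assert (Fw : forall j, J j = I j -> J (j + 1)%Z = I (j + 1)%Z).
  { intros j Hj. pose proof (W0 j). unfold W in H. rewrite Hj in H.
    pose proof (HIp j). apply (Rmult_eq_reg_l (I j)). lra. lra. }
  assert (Bw : forall j, J j = I j -> J (j - 1)%Z = I (j - 1)%Z).
  { intros j Hj. pose proof (W0 (j - 1)%Z). unfold W in H.
    replace (j - 1 + 1)%Z with j in H by lia. rewrite Hj in H.
    pose proof (HIp j). apply (Rmult_eq_reg_l (I j)). lra. lra. }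
  apply (Z_cover_up (fun j => J j = I j) j0).
  - intro n. induction n. simpl. replace (j0 + 0)%Z with j0 by lia. auto.
    rewrite Nat2Z.inj_succ. replace (j0 + Z.succ (Z.of_nat n))%Z with (j0 + Z.of_nat n + 1)%Z by lia. auto.
  - intro n. induction n. simpl. replace (j0 - 0)%Z with j0 by lia. auto.
    rewrite Nat2Z.inj_succ. replace (j0 - Z.succ (Z.of_nat n))%Z with (j0 - Z.of_nat n - 1)%Z by lia. auto.
Qed.

Lemma pos_spread (s0 tau eta lam : R) (I0 I : Z -> R) :
  0 < lam -> stationary_solution s0 tau eta lam I0 I ->
  (forall j, 0 <= I j) -> (forall j, 0 <= I0 j) -> (exists j0, 0 < I0 j0) -> forall j, 0 < I j.
Proof.
  intros Hl HS Hp HI0 [j0 Hj0] j.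
  destruct (Rlt_dec 0 (I j)) as [h|h]; auto. exfalso.
  assert (Z0 : forall k, I k = 0 -> I (k + 1)%Z = 0 /\ I (k - 1)%Z = 0 /\ I0 k = 0).
  { intros k Hk. pose proof (HS k) as E. unfold fSIR in E. rewrite Hk in E.
    rewrite Rmult_0_r, exp_0 in E.
    pose proof (Hp (k + 1)%Z). pose proof (Hp (k - 1)%Z). pose proof (HI0 k).
    assert (lam * I (k + 1)%Z >= 0) by nra. assert (lam * I (k - 1)%Z >= 0) by nra.
    repeat split; nra. }
  assert (All : forall k, I k = 0).
  { apply (Z_cover_up (fun k => I k = 0) j).
    - intro n. induction n. simpl. replace (j + 0)%Z with j by lia. specialize (Hp j); lra.
      rewrite Nat2Z.inj_succ. replace (j + Z.succ (Z.of_nat n))%Z with (j + Z.of_nat n + 1)%Z by lia.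
      apply Z0; auto.
    - intro n. induction n. simpl. replace (j - 0)%Z with j by lia. specialize (Hp j); lra.
      rewrite Nat2Z.inj_succ. replace (j - Z.succ (Z.of_nat n))%Z with (j - Z.of_nat n - 1)%Z by lia.
      apply Z0; auto. }
  destruct (Z0 j0 (All j0)) as [_ [_ H]]. lra.
Qed.

Lemma halves (J : Z -> R) (L : R) (N0 : Z) : (0 <= N0)%Z ->
  (forall eps, 0 < eps -> exists K, forall n, (K <= n)%nat -> Rabs (J (N0 + Z.of_nat n)%Z - L) < eps) ->
  (forall eps, 0 < eps -> exists K, forall n, (K <= n)%nat -> Rabs (J (- N0 - Z.of_nat n)%Z - L) < eps) ->
  lim_abs_infty J L.
Proof.
  intros HN0 H1 H2 eps Heps.
  destruct (H1 eps Heps) as [K1 HK1]. destruct (H2 eps Heps) as [K2 HK2].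
  exists (N0 + Z.of_nat K1 + Z.of_nat K2)%Z. intros j Hj.
  destruct (Z_le_gt_dec 0 j).
  - specialize (HK1 (Z.to_nat (j - N0)) ltac:(lia)). rewrite Z2Nat.id in HK1 by lia.
    replace (N0 + (j - N0))%Z with j in HK1 by lia. auto.
  - specialize (HK2 (Z.to_nat (- j - N0)) ltac:(lia)). rewrite Z2Nat.id in HK2 by lia.
    replace (- N0 - (- j - N0))%Z with j in HK2 by lia. auto.
Qed.

Lemma hrec_right (s0 tau eta lam : R) (I0 J : Z -> R) (N : Z) :
  (forall j, (N < Z.abs j)%Z -> I0 j = 0) -> stationary_solution s0 tau eta lam I0 J ->
  hrec lam (fSIR s0 tau eta) (fun n => J (Z.abs N + Z.of_nat n)%Z).
Proof.
  intros HN HS k. unfold hrec. cbv beta. pose proof (HS (Z.abs N + Z.of_nat (S k))%Z) as E.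
  rewrite HN in E by lia.
  replace (Z.abs N + Z.of_nat (S k) - 1)%Z with (Z.abs N + Z.of_nat k)%Z in E by lia.
  replace (Z.abs N + Z.of_nat (S k) + 1)%Z with (Z.abs N + Z.of_nat (S (S k)))%Z in E by lia.
  lra.
Qed.

Lemma hrec_left (s0 tau eta lam : R) (I0 J : Z -> R) (N : Z) :
  (forall j, (N < Z.abs j)%Z -> I0 j = 0) -> stationary_solution s0 tau eta lam I0 J ->
  hrec lam (fSIR s0 tau eta) (fun n => J (- Z.abs N - Z.of_nat n)%Z).
Proof.
  intros HN HS k. unfold hrec. cbv beta. pose proof (HS (- Z.abs N - Z.of_nat (S k))%Z) as E.
  rewrite HN in E by lia.
  replace (- Z.abs N - Z.of_nat (S k) - 1)%Z with (- Z.abs N - Z.of_nat (S (S k)))%Z in E by lia.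
  replace (- Z.abs N - Z.of_nat (S k) + 1)%Z with (- Z.abs N - Z.of_nat k)%Z in E by lia.
  lra.
Qed.

Lemma conv_sol (s0 tau eta lam : R) (I0 J : Z -> R) :
  0 < s0 -> 0 < tau -> 0 < eta -> 0 < lam -> finitely_supported I0 ->
  stationary_solution s0 tau eta lam I0 J -> positive_seq J -> bounded_seq J ->
  (R0_SIR s0 tau eta <= 1 -> lim_abs_infty J 0) /\
  (forall Is, 0 < Is -> fSIR s0 tau eta Is = 0 -> lim_abs_infty J Is).
Proof.
  intros Hs Ht He Hl [N HN] HS HP [M HM].
  assert (HM' : forall j, J j <= M) by (intro j; specialize (HM j); pose proof (Rle_abs (J j)); lra).
  pose proof (hrec_right s0 tau eta lam I0 J N HN HS) as Rr.
  pose proof (hrec_left s0 tau eta lam I0 J N HN HS) as Rl.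
  split.
  - intro HR. apply (halves J 0 (Z.abs N)). lia.
    + intros eps Heps. destruct (half_le s0 tau eta lam M _ Hs Ht He Hl HR Rr (fun k => HP _) (fun k => HM' _) eps Heps) as [K HK].
      exists K. intros n Hn. rewrite Rminus_0_r. apply HK; auto.
    + intros eps Heps. destruct (half_le s0 tau eta lam M _ Hs Ht He Hl HR Rl (fun k => HP _) (fun k => HM' _) eps Heps) as [K HK].
      exists K. intros n Hn. rewrite Rminus_0_r. apply HK; auto.
  - intros Is HIs HF. apply (halves J Is (Z.abs N)). lia.
    + intros eps Heps. destruct (half_gt s0 tau eta lam M Is _ Hs Ht Hl HIs HF Rr (fun k => HP _) (fun k => HM' _) eps Heps) as [K HK].
      exists K. intros n Hn. apply HK; auto.
    + intros eps Heps. destruct (half_gt s0 tau eta lam M Is _ Hs Ht Hl HIs HF Rl (fun k => HP _) (fun k => HM' _) eps Heps) as [K HK].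
      exists K. intros n Hn. apply HK; auto.
Qed.

Theorem theorem1 (s0 tau eta lambda : R) (I0 : Z -> R)
  (Hs0 : 0 < s0 < 1) (Htau : 0 < tau) (Heta : 0 < eta) (Hlam : 0 < lambda)
  (HI0fin : finitely_supported I0)
  (HI0range : forall j : Z, 0 <= I0 j < 1)
  (HI0pos : exists j : Z, 0 < I0 j) :
  exists Iinf : Z -> R,
    stationary_solution s0 tau eta lambda I0 Iinf /\
    positive_seq Iinf /\ bounded_seq Iinf /\
    (forall J : Z -> R,
        stationary_solution s0 tau eta lambda I0 J ->
        positive_seq J -> bounded_seq J -> forall j : Z, J j = Iinf j) /\
    (R0_SIR s0 tau eta <= 1 -> lim_abs_infty Iinf 0) /\
    (1 < R0_SIR s0 tau eta ->
       exists Istar : R,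
         0 < Istar /\ fSIR s0 tau eta Istar = 0 /\
         (forall v : R, 0 < v -> fSIR s0 tau eta v = 0 -> v = Istar) /\
         lim_abs_infty Iinf Istar).
Proof.
  destruct (Iinf_exists s0 tau eta lambda I0 Hs0 Htau Heta Hlam HI0range) as [Iinf Hcv].
  pose proof (uit_props s0 tau eta lambda I0 Hs0 Htau Heta Hlam HI0range) as P.
  assert (Hs : 0 < s0) by lra.
  assert (HS : stationary_solution s0 tau eta lambda I0 Iinf).
  { apply (proj2 (Top_fix s0 tau eta lambda I0 Iinf Heta Hlam)).
    apply Iinf_fix; auto. }
  assert (Hnn : forall j, 0 <= Iinf j).
  { intro j. pose proof (growing_ineq (fun n => uit s0 tau eta lambda I0 n j) (Iinf j)
      (fun n => proj1 (proj2 (P n j))) (Hcv j) 0%nat). simpl in H. lra. }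
  assert (Hub : forall j, Iinf j <= (s0 + 1) / eta).
  { intro j. apply (cv_le _ _ _ (Hcv j)). intro n. apply (P n j). }
  assert (HI0nn : forall j, 0 <= I0 j) by (intro j; apply HI0range).
  assert (Hpos : positive_seq Iinf).
  { intro j. apply (pos_spread s0 tau eta lambda I0 Iinf Hlam HS Hnn HI0nn HI0pos). }
  assert (Hbd : bounded_seq Iinf).
  { exists ((s0 + 1) / eta). intro j. rewrite Rabs_right. apply Hub. specialize (Hnn j). lra. }
  pose proof (conv_sol s0 tau eta lambda I0 Iinf Hs Htau Heta Hlam HI0fin HS Hpos Hbd) as [Cle Cgt].
  assert (Zuniq : 1 < R0_SIR s0 tau eta -> exists Is, 0 < Is /\ fSIR s0 tau eta Is = 0 /\
           (forall v : R, 0 < v -> fSIR s0 tau eta v = 0 -> v = Is)).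
  { intro HR. destruct (Istar_exists s0 tau eta Hs Htau Heta HR) as [Is [HIs HF]].
    exists Is. repeat split; auto. intros v Hv Hfv.
    destruct (Rtotal_order v Is) as [h|[h|h]]; auto; exfalso.
    - pose proof (f_ratio s0 tau eta v Is Hs Htau Hv h). rewrite HF, Hfv in H. lra.
    - pose proof (f_ratio s0 tau eta Is v Hs Htau HIs h). rewrite HF, Hfv in H. lra. }
  exists Iinf. split; [auto|]. split; [auto|]. split; [auto|]. split.
  - intros J HJ HJp [MJ HMJ].
    assert (Hle : forall j, Iinf j <= J j).
    { intro j. apply (cv_le _ _ _ (Hcv j)). intro n.
      apply (uit_below s0 tau eta lambda I0 J Hs Htau Heta Hlam HJ); auto.
      intro k. left. apply HJp. }
    assert (HMJ' : forall j, J j <= MJ) by (intro j; specialize (HMJ j); pose proof (Rle_abs (J j)); lra).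
    pose proof (conv_sol s0 tau eta lambda I0 J Hs Htau Heta Hlam HI0fin HJ HJp (ex_intro _ MJ HMJ)) as [Jle Jgt].
    destruct (Rle_dec (R0_SIR s0 tau eta) 1) as [HR|HR].
    + apply (wronski s0 tau eta lambda MJ 0 I0 Iinf J Hs Htau Hlam (Rle_refl 0) HI0nn HI0pos HS HJ Hpos Hle HMJ'); auto.
    + destruct (Zuniq ltac:(lra)) as [Is [HIs [HF _]]].
      apply (wronski s0 tau eta lambda MJ Is I0 Iinf J Hs Htau Hlam ltac:(lra) HI0nn HI0pos HS HJ Hpos Hle HMJ'); auto.
  - split; auto.
    intro HR. destruct (Zuniq HR) as [Is [HIs [HF HU]]]. exists Is. repeat split; auto.
Qed.
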